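(* Let $X$ and $Y$ be finite sets with $|Y| = n$, let $I = X \cap Y$, and let $p \in [1/2, 1]$. Define two random variables as follows. (1) (Mechanism $\mathcal M_Y$.) Include each element $y \in Y$ in a random subset $Y_{\mathrm{sub}} \subseteq Y$ independently with probability $p$, and set $Z = |X \cap Y_{\mathrm{sub}}|$. (2) (Mechanism $\mathcal M'_Y$.) Sample $s \sim \mathrm{Bin}(n, 2(1-p))$; then choose $T$ uniformly at random among all subsets of $Y$ of cardinality $s$; then, independently for each $y \in I \cap T$, flip a fair coin $c_y \sim \mathrm{Ber}(1/2)$; set $Z' = |I \setminus T| + \sum_{y \in I \cap T} c_y$. Then $Z$ and $Z'$ have the same probability mass function: $\Pr[Z = z] = \Pr[Z' = z]$ for all integers $z \ge 0$.
   Context: $\mathrm{Ber}(r)$ denotes a Bernoulli random variable with success probability $r$, and $\mathrm{Bin}(m, r)$ a binomial random variable with $m$ trials and success probability $r$. All random choices are independent unless stated otherwise. *)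

(* Defs.v *)
From mathcomp Require Import all_boot all_order all_algebra.
Set Implicit Arguments. Unset Strict Implicit. Unset Printing Implicit Defensive.
Import Order.TTheory GRing.Theory Num.Theory.
Local Open Scope ring_scope.

Section Mech.
Variables (R : realFieldType) (T : finType).

Definition bin_pmf (m : nat) (r : R) (k : nat) : R :=
  ('C(m, k))%:R * r ^+ k * (1 - r) ^+ (m - k).

Definition indep_subset_pmf (A : {set T}) (r : R) (S : {set T}) : R :=
  if S \subset A then r ^+ #|S| * (1 - r) ^+ (#|A| - #|S|) else 0.

Definition unif_ksubset_pmf (A : {set T}) (s : nat) (S : {set T}) : R :=
  if (S \subset A) && (#|S| == s) then ('C(#|A|, s))%:R^-1 else 0.

Definition PrZ (X Y : {set T}) (p : R) (z : nat) : R :=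
  \sum_(S : {set T}) indep_subset_pmf Y p S * (#|X :&: S| == z)%:R.

(* Pr[Z' = z] for mechanism M'_Y: s ~ Bin(n, 2(1-p)), T uniform s-subset of Y,
   fair coins on I :&: T (the set C of coins showing 1 is a subset of I :&: T
   including each element independently w.p. 1/2), Z' = |I \ T| + |C|. *)
Definition PrZ' (X Y : {set T}) (p : R) (z : nat) : R :=
  let I := X :&: Y in
  \sum_(s < #|Y|.+1) bin_pmf #|Y| (2 * (1 - p)) s *
    \sum_(Ts : {set T}) unif_ksubset_pmf Y s Ts *
      \sum_(C : {set T}) indep_subset_pmf (I :&: Ts) (2%:R^-1) C *
        ((#|I :\: Ts| + #|C|)%N == z)%:R.

End Mech.

(* Main.v *)
Require Import Defs.
From mathcomp Require Import all_boot all_order all_algebra.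
From mathcomp Require Import ring.
Import Order.TTheory GRing.Theory Num.Theory.
Local Open Scope ring_scope.

Section Helpers.
Set Implicit Arguments.
Variables (R : realFieldType) (T : finType).

Definition wf (A : {set T}) (r : R) (i : T) (b : bool) : R :=
  if i \in A then (if b then r else 1 - r) else (if b then 0 else 1).

Lemma ind_prod (A : {set T}) r S :
  indep_subset_pmf A r S = \prod_(i : T) wf A r i (i \in S).
Proof.
rewrite /indep_subset_pmf /wf; case: ifPn => [sSA|nsSA].
  rewrite (bigID (mem S)) /=.
  rewrite (eq_bigr (fun=> r)); last by move=> i iS; rewrite iS (subsetP sSA _ iS).
  rewrite prodr_const.
  rewrite (eq_bigr (fun i => if i \in A then 1 - r else 1)); last first.
    by move=> i /negbTE ->.
  rewrite -big_mkcondr /= prodr_const.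
  have -> : #|[pred i | (i \notin S) && (i \in A)]| = #|A :\: S|.
    by apply: eq_card => i; rewrite !inE andbC.
  rewrite cardsD (setIidPr sSA).
  congr (_ ^+ _ * _); apply: eq_card => i; by rewrite !inE.
case/subsetPn: nsSA => i iS niA.
by rewrite (bigD1 i) //= iS (negbTE niA) mul0r.
Qed.

Lemma sum_set_prod (U : comNzRingType) (F : T -> bool -> U) :
  \sum_(S : {set T}) \prod_(i : T) F i (i \in S) = \prod_(i : T) (F i true + F i false).
Proof.
transitivity (\prod_(i : T) \sum_(b : bool) F i b); last first.
  by apply: eq_bigr => i _; rewrite big_bool.
rewrite bigA_distr_bigA /=.
rewrite (reindex (fun f : {ffun T -> bool} => [set x | f x])) /=.
  by apply: eq_bigr => f _; apply: eq_bigr => i _; rewrite inE.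
exists (fun S : {set T} => [ffun x => x \in S]) => f _.
  by apply/ffunP => x; rewrite ffunE inE.
by apply/setP => x; rewrite inE ffunE.
Qed.

Lemma Xn_prod (D : {set T}) :
  'X^#|D| = \prod_(i : T) (if i \in D then 'X else 1) :> {poly R}.
Proof. by rewrite -big_mkcond /= prodr_const. Qed.

Lemma sum_ind_X (A B : {set T}) (r : R) :
  \sum_(S : {set T}) indep_subset_pmf A r S *: 'X^#|B :&: S| =
  \prod_(i : T) (if i \in A then (if i \in B then r *: 'X + (1 - r)%:P else 1) else 1).
Proof.
transitivity (\sum_(S : {set T}) \prod_(i : T)
   ((wf A r i (i \in S))%:P * (if (i \in B) && (i \in S) then 'X else 1))).
  apply: eq_bigr => S _; rewrite ind_prod -mul_polyC rmorph_prod Xn_prod -big_split /=.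
  by apply: eq_bigr => i _; rewrite inE.
rewrite (sum_set_prod _ (fun i b => (wf A r i b)%:P * (if (i \in B) && b then 'X else 1))).
apply: eq_bigr => i _; rewrite /wf.
case: (i \in A); case: (i \in B) => /=; rewrite ?mulr1 ?mul_polyC //.
- by rewrite -polyCD addrC subrK polyC1.
- by rewrite scale0r add0r polyC1.
- by rewrite add0r polyC1.
Qed.

Lemma coef_sumZX (a : {set T} -> R) (k : {set T} -> nat) z :
  (\sum_(S : {set T}) a S *: 'X^(k S))`_z = \sum_(S : {set T}) a S * (k S == z)%:R.
Proof.
by rewrite coef_sum; apply: eq_bigr => S _; rewrite coefZ coefXn eq_sym.
Qed.

Lemma bin_unif (Y Ts : {set T}) (q : R) :
  \sum_(s < #|Y|.+1) bin_pmf #|Y| q s * unif_ksubset_pmf R Y s Ts =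
  indep_subset_pmf Y q Ts.
Proof.
rewrite /unif_ksubset_pmf /indep_subset_pmf; case: ifPn => sub; last first.
  by apply: big1 => s _; rewrite /= mulr0.
have le : (#|Ts| < #|Y|.+1)%N by rewrite ltnS subset_leq_card.
rewrite (bigD1 (Ordinal le)) //= big1 ?addr0.
  rewrite eqxx /bin_pmf.
  have nz : ('C(#|Y|, #|Ts|))%:R != 0 :> R by rewrite pnatr_eq0 -lt0n bin_gt0 subset_leq_card.
  by rewrite mulrC !mulrA mulVf // mul1r.
move=> i ne /=; case: eqP => [E|]; last by rewrite mulr0.
by exfalso; move/eqP: ne; apply; apply/val_inj => /=.
Qed.

End Helpers.

Theorem lemma2 (R : realFieldType) (T : finType) (X Y : {set T}) (p : R) :
  2%:R^-1 <= p -> p <= 1 ->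
  forall z : nat, PrZ X Y p z = PrZ' X Y p z.
Proof.
move=> _ _ z.
set q := 2 * (1 - p).
set h : R := 2%:R^-1.
have -> : PrZ' X Y p z = \sum_(Ts : {set T}) indep_subset_pmf Y q Ts *
     \sum_(C : {set T}) indep_subset_pmf (X :&: Y :&: Ts) h C *
        ((#|X :&: Y :\: Ts| + #|C|)%N == z)%:R.
  rewrite /PrZ' /=.
  under eq_bigr do rewrite big_distrr /=.
  rewrite exchange_big /=; apply: eq_bigr => Ts _.
  under eq_bigr do rewrite mulrA.
  by rewrite -big_distrl /= bin_unif.
have -> : \sum_(Ts : {set T}) indep_subset_pmf Y q Ts *
     \sum_(C : {set T}) indep_subset_pmf (X :&: Y :&: Ts) h C *
        ((#|X :&: Y :\: Ts| + #|C|)%N == z)%:R =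
   (\sum_(Ts : {set T}) indep_subset_pmf Y q Ts *:
     ('X^#|X :&: Y :\: Ts| * \sum_(C : {set T}) indep_subset_pmf (X :&: Y :&: Ts) h C *: 'X^#|C|))`_z.
  rewrite coef_sum; apply: eq_bigr => Ts _.
  rewrite coefZ; congr (_ * _); rewrite big_distrr coef_sum /=.
  apply: eq_bigr => C _.
  by rewrite -scalerAr -exprD coefZ coefXn eq_sym.
rewrite /PrZ -(coef_sumZX R (fun S => indep_subset_pmf Y p S) (fun S => #|X :&: S|)).
rewrite sum_ind_X.
apply: (congr1 (fun P : {poly R} => P`_z)).
transitivity (\sum_(Ts : {set T}) \prod_(i : T)
   ((wf R Y q i (i \in Ts))%:P * ((if (i \in X :&: Y) && ~~ (i \in Ts) then 'X else 1) *
      (if (i \in X :&: Y) && (i \in Ts) then h *: 'X + (1 - h)%:P else 1)))); last first.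
  apply: eq_bigr => Ts _.
  rewrite (eq_bigr (fun C => indep_subset_pmf (X :&: Y :&: Ts) h C *: 'X^#|setT :&: C|)); last by move=> C _; rewrite setTI.
  rewrite sum_ind_X ind_prod -[_ *: ('X^_ * _)]mul_polyC rmorph_prod Xn_prod -!big_split /=.
  by apply: eq_bigr => i _; rewrite !inE ?andbT; case: (i \in Ts); case: (i \in X); case: (i \in Y).
have := (sum_set_prod _ _ (fun i b => (wf R Y q i b)%:P * ((if (i \in X :&: Y) && ~~ b then 'X else 1) *
      (if (i \in X :&: Y) && b then h *: 'X + (1 - h)%:P else 1)))); rewrite /= => ->.
apply: eq_bigr => i _; rewrite /wf !inE.
case: (i \in Y); case: (i \in X) => /=; rewrite ?mulr1 ?mul1r.
- apply/polyP => j; rewrite !(coefD, coefCM, coefZ, coefX, coefC, mulr1).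
  have h2 : (2%:R : R) != 0 by rewrite pnatr_eq0.
  case: j => [|[|j]] /=; rewrite /q /h; field; done.
- by rewrite -polyCD addrC subrK polyC1.
- by rewrite polyC0 add0r polyC1.
- by rewrite polyC0 add0r polyC1.
Qed.
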